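(* Let $G$ be a very well-covered graph. Then for every local maximum stable set $S\in\Psi(G)$, the induced subgraph $G[N[S]]$ is a König–Egerváry graph.
   Context: All graphs are finite, simple, undirected. For $A\subseteq V(G)$, $N(A)=\{v\in V(G)-A: N(v)\cap A\neq\emptyset\}$ and $N[A]=A\cup N(A)$; $G[X]$ is the subgraph induced by $X$. A stable set is a set of pairwise non-adjacent vertices; $\alpha(G)$ is the maximum size of a stable set, and $\mu(G)$ the maximum size of a matching. $G$ is a König–Egerváry graph if $\alpha(G)+\mu(G)=|V(G)|$. $G$ is well-covered if all its maximal stable sets have the same cardinality, and very well-covered if it is well-covered, has no isolated vertices, and $|V(G)|=2\alpha(G)$. A set $A\subseteq V(G)$ is a local maximum stable set of $G$ if $A$ is a maximum stable set of $G[N[A]]$; $\Psi(G)$ denotes the family of all local maximum stable sets of $G$. *)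

(* Defs.v *)
(* A finite simple graph G is a type of vertices T : finType
   with a symmetric irreflexive adjacency relation e : rel T. Induced subgraphs
   G[X] are handled via vertex subsets X : {set T}. *)
From mathcomp Require Import all_boot all_order.
Set Implicit Arguments. Unset Strict Implicit. Unset Printing Implicit Defensive.

Section Graphs.
Variables (T : finType) (e : rel T).

Definition stable (S : {set T}) : bool :=
  [forall x in S, forall y in S, ~~ e x y].

Definition alpha_in (X : {set T}) : nat :=
  \max_(S : {set T} | (S \subset X) && stable S) #|S|.

Definition alpha : nat := alpha_in [set: T].

(* A matching of G[X]: a set of (oriented) edges, each with both ends in X,
   pairwise vertex-disjoint (so an edge cannot appear with both orientations). *)
Definition matching_in (X : {set T}) (M : {set T * T}) : bool :=
  [forall p in M, [&& e p.1 p.2, p.1 \in X & p.2 \in X]] &&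
  [forall p in M, forall q in M, (p != q) ==>
     [&& p.1 != q.1, p.1 != q.2, p.2 != q.1 & p.2 != q.2]].

Definition mu_in (X : {set T}) : nat :=
  \max_(M : {set T * T} | matching_in X M) #|M|.

Definition KE_in (X : {set T}) : Prop := alpha_in X + mu_in X = #|X|.

Definition closed_nbhd (A : {set T}) : {set T} :=
  A :|: [set v | [exists u in A, e v u]].

Definition well_covered : Prop :=
  forall S : {set T}, maxset stable S -> #|S| = alpha.

Definition very_well_covered : Prop :=
  [/\ well_covered, (forall v : T, exists u : T, e v u) & #|T| = 2 * alpha].

Definition local_max_stable (A : {set T}) : Prop :=
  stable A /\ #|A| = alpha_in (closed_nbhd A).

End Graphs.

(* Main.v *)
From Stdlib Require Import Lia.
Require Import Defs.
From mathcomp Require Import all_boot all_order.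
Set Implicit Arguments. Unset Strict Implicit. Unset Printing Implicit Defensive.
Set Warnings "-deprecated".

Ltac mylia := intros; repeat match goal with H : is_true (_ <= _) |- _ => move/leP: H => H end;
  try apply/leP; unfold addn, addn_rec, subn, subn_rec, muln, muln_rec in *; lia.

Section Hall.
Variable T : finType.

Definition NR (r : rel T) (A : {set T}) := [set y | [exists x in A, r x y]].

Lemma NRU r (A B : {set T}) : NR r (A :|: B) = NR r A :|: NR r B.
Proof.
apply/setP => y; rewrite !inE; apply/existsP/orP.
  by case=> x /andP[]; rewrite inE => /orP[] xA rxy; [left|right];
     apply/existsP; exists x; rewrite xA.
by case=> /existsP[x /andP[xA rxy]]; exists x; rewrite inE xA ?orbT.
Qed.

Lemma NRS r (A B : {set T}) : A \subset B -> NR r A \subset NR r B.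
Proof.
move=> sAB; apply/subsetP => y; rewrite !inE => /existsP[x /andP[xA rxy]].
by apply/existsP; exists x; rewrite (subsetP sAB).
Qed.

Lemma hall (r : rel T) (X : {set T}) :
  (forall A : {set T}, A \subset X -> #|A| <= #|NR r A|) ->
  exists f : T -> T, {in X &, injective f} /\ (forall x, x \in X -> r x (f x)).
Proof.
move: {2}#|X| (leqnn #|X|) => n; elim: n r X => [|n IH] r X.
  rewrite leqn0 => /eqP/cards0_eq -> _.
  by exists id; split; [move=> ? ?|move=> ?; rewrite in_set0].
move=> leX hallX.
case: (set_0Vmem X) => [-> | [x0 x0X]].
  by exists id; split; [move=> ? ?|move=> ?; rewrite in_set0].
case: (boolP [exists A : {set T}, [&& A \proper X, A != set0 & #|NR r A| == #|A|]]).
- case/existsP => A /and3P [pAX nA /eqP tight].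
  have sAX := proper_sub pAX.
  have ltAX := proper_card pAX.
  have [f1 [inj1 r1]] : exists f : T -> T, {in A &, injective f} /\ (forall x, x \in A -> r x (f x)).
    apply: IH; first by mylia.
    by move=> B sBA; apply: hallX; apply: subset_trans sAX.
  pose r2 := fun a b => r a b && (b \notin NR r A).
  have [f2 [inj2 r2']] : exists f : T -> T, {in X :\: A &, injective f} /\
                                           (forall x, x \in X :\: A -> r2 x (f x)).
    apply: IH.
      rewrite cardsDS //. have : 0 < #|A| by rewrite card_gt0. move=> ?; by mylia.
    move=> B sBXA.
    have eN : NR r2 B = NR r B :\: NR r A.
      apply/setP => y; rewrite !inE; apply/existsP/andP.
        case=> x /andP[xB /andP[rxy nyA]]; split; first by move: nyA; rewrite inE.
        by apply/existsP; exists x; rewrite xB.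
      case=> nyA /existsP[x /andP[xB rxy]]; exists x; rewrite xB /r2 rxy /= inE; exact: nyA.
    have dAB : A :&: B = set0.
      apply/setP => z; rewrite !inE; apply/negP => /andP[zA zB].
      by move: (subsetP sBXA z zB); rewrite !inE zA.
    have h1 := hallX (A :|: B) (ltac:(by rewrite subUset sAX (subset_trans sBXA) // subsetDl)).
    move: h1; rewrite NRU cardsU dAB cards0 subn0 eN.
    have := cardsUI (NR r A) (NR r B).
    have := cardsID (NR r A) (NR r B).
    rewrite setIC tight. move=> H1 H2 H3. by mylia.
  exists (fun a => if a \in A then f1 a else f2 a); split.
    move=> a b aX bX /=.
    case: ifP => aA; case: ifP => bA.
    + exact: inj1.
    + move=> E; have := r2' b (ltac:(by rewrite inE bA bX)); rewrite /r2 -E => /andP[_].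
      by rewrite inE; case/negP; apply/existsP; exists a; rewrite aA r1.
    + move=> E; have := r2' a (ltac:(by rewrite inE aA aX)); rewrite /r2 E => /andP[_].
      by rewrite inE; case/negP; apply/existsP; exists b; rewrite bA r1.
    + by apply: inj2; rewrite inE ?aA ?bA.
  move=> a aX; case: ifP => aA; first exact: r1.
  by case/andP: (r2' a (ltac:(by rewrite inE aA aX))).
- rewrite negb_exists => /forallP noT.
  have : 1 <= #|NR r [set x0]| by rewrite -(cards1 x0); apply: hallX; rewrite sub1set.
  rewrite card_gt0 => /set0Pn [y]; rewrite inE => /existsP [x1]; rewrite inE => /andP[/eqP-> rxy].
  pose r' := fun a b => r a b && (b != y).
  have [f' [inj' r'']] : exists f : T -> T, {in X :\ x0 &, injective f} /\
                                           (forall x, x \in X :\ x0 -> r' x (f x)).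
    apply: IH.
      move: leX; rewrite (cardsD1 x0 X) x0X add1n ltnS; done.
    move=> B sB.
    case: (set_0Vmem B) => [-> | [b bB]]; first by rewrite cards0.
    have pBX : B \proper X.
      rewrite properEneq (subset_trans sB) ?subsetDl // andbT.
      apply/eqP => E; move: (subsetP sB x0); rewrite E x0X !inE eqxx /=.
      by move=> H; have := H isT.
    have nB : B != set0 by apply/set0Pn; exists b.
    have := noT B; rewrite pBX nB /= => ne.
    have le := hallX B (proper_sub pBX).
    have lt : #|B| < #|NR r B| by rewrite ltn_neqAle le andbT eq_sym.
    have sub : NR r B :\ y \subset NR r' B.
      apply/subsetP => z; rewrite !inE => /andP[zy /existsP[x /andP[xB rxz]]].
      by apply/existsP; exists x; rewrite xB /r' rxz zy.
    have := subset_leq_card sub; have := cardsD1 y (NR r B).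
    case: (y \in NR r B) => /= H1 H2; by mylia.
  exists (fun a => if a == x0 then y else f' a); split.
    move=> a b aX bX /=.
    case: eqP => [->|ax]; case: eqP => [->|bx] //.
    + move=> E; have := r'' b (ltac:(by rewrite !inE bX andbT; apply/eqP)).
      by rewrite /r' -E eqxx andbF.
    + move=> E; have := r'' a (ltac:(by rewrite !inE aX andbT; apply/eqP)).
      by rewrite /r' E eqxx andbF.
    + by apply: inj'; rewrite !inE ?aX ?bX andbT; apply/eqP.
  move=> a aX; case: eqP => [->|ax]; first exact: rxy.
  by case/andP: (r'' a (ltac:(by rewrite !inE aX andbT; apply/eqP))).
Qed.
End Hall.

Section Graph.
Variables (T : finType) (e : rel T).
Hypotheses (e_sym : symmetric e) (e_irr : irreflexive e).

Definition Nb (A : {set T}) := [set v | [exists u in A, e v u]].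

Lemma NbP (A : {set T}) v : reflect (exists2 u, u \in A & e v u) (v \in Nb A).
Proof.
rewrite inE; apply: (iffP existsP).
  by case=> u /andP[uA evu]; exists u.
by case=> u uA evu; exists u; rewrite uA.
Qed.

Lemma stableP (A : {set T}) :
  reflect (forall x y, x \in A -> y \in A -> ~~ e x y) (stable e A).
Proof.
apply: (iffP forallP) => H.
  move=> x y xA yA; move: (H x); rewrite xA /= => /forallP/(_ y).
  by rewrite yA.
move=> x; apply/implyP => xA; apply/forallP => y; apply/implyP => yA.
exact: H.
Qed.

Lemma stable_sub (A B : {set T}) : B \subset A -> stable e A -> stable e B.
Proof.
move=> sBA /stableP H; apply/stableP => x y xB yB.
by apply: H; apply: (subsetP sBA).
Qed.

Lemma alpha_in_ge (X A : {set T}) : A \subset X -> stable e A -> #|A| <= alpha_in e X.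
Proof.
move=> sAX stA.
exact: (@leq_bigmax_cond _ (fun S : {set T} => (S \subset X) && stable e S)
          (fun S => #|S|) A (introT andP (conj sAX stA))).
Qed.

Lemma alpha_ge (A : {set T}) : stable e A -> #|A| <= alpha e.
Proof. by move=> stA; apply: alpha_in_ge => //; apply: subsetT. Qed.

Lemma alpha_attained : exists I : {set T}, stable e I /\ #|I| = alpha e.
Proof.
pose P := fun S : {set T} => (S \subset setT) && stable e S.
have P0 : P set0 by rewrite /P sub0set; apply/stableP => x y; rewrite in_set0.
exists [arg max_(S > set0 | P S) #|S|].
rewrite /alpha /alpha_in (bigmax_eq_arg set0 P0).
by case: arg_maxnP => // I /andP[_ stI] _; split.
Qed.

Lemma stable1 y : stable e [set y].
Proof. by apply/stableP => a b; rewrite !inE => /eqP-> /eqP->; rewrite e_irr. Qed.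

Lemma cardU_dis (A B : {set T}) :
  (forall x, x \in A -> x \notin B) -> #|A :|: B| = #|A| + #|B|.
Proof.
move=> H; rewrite cardsU.
have -> : A :&: B = set0.
  by apply/setP => x; rewrite !inE; apply/negP => /andP[xA xB]; move: (H x xA); rewrite xB.
by rewrite cards0 subn0.
Qed.

Lemma stable_Nb (A : {set T}) x : stable e A -> x \in A -> x \notin Nb A.
Proof.
move=> /stableP stA xA; apply/negP => /NbP[u uA exu].
by move: (stA x u xA uA); rewrite exu.
Qed.

Lemma L1 : well_covered e -> (forall v, exists u, e v u) ->
  forall A : {set T}, stable e A -> #|A| <= #|Nb A|.
Proof.
move=> wc noiso A0 stA0; rewrite leqNgt; apply/negP => ltA0.
pose df := fun A : {set T} => #|A| - #|Nb A|.
pose d := \max_(A | stable e A) df A.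
have dA0 : df A0 <= d by exact: (@leq_bigmax_cond _ (fun A => stable e A) df A0 stA0).
pose Pd := fun A : {set T} => stable e A && (df A == d).
have [A1 PA1] : exists A1, Pd A1.
  exists [arg max_(A > A0 | stable e A) df A].
  rewrite /Pd /d (bigmax_eq_arg A0 stA0).
  by case: arg_maxnP => // I stI _; rewrite stI eqxx.
case: (@arg_minnP _ A1 Pd (fun A : {set T} => #|A|) PA1) => A /andP[stA /eqP dfA] minA.
have d1 : 1 <= d by move: ltA0 dA0; rewrite /df; mylia.
have ltA : #|Nb A| < #|A| by move: dfA d1; rewrite /df => <-; mylia.
have [a aA] : exists a, a \in A.
  by apply/set0Pn; rewrite -card_gt0; move: ltA; mylia.
have [y eay] := noiso a.
have yN : y \in Nb A by apply/NbP; exists a => //; rewrite e_sym.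
have [J maxJ sJ] := maxset_exists (stable1 y).
have yJ : y \in J by rewrite (subsetP sJ) // inE.
have stJ : stable e J by case/maxsetP: maxJ.
have cJ := wc J maxJ.
pose Z := J :&: Nb A.
pose A' := A :\: Nb Z.
have stA' : stable e A' by apply: stable_sub stA; apply: subsetDl.
have ltA' : #|A'| < #|A|.
  apply: proper_card; rewrite properE subsetDl /=.
  apply/subsetPn; exists a => //; rewrite inE negb_and negbK aA orbF.
  by apply/NbP; exists y => //; rewrite inE yJ yN.
have dA' : df A' < d.
  have le : df A' <= d by exact: (@leq_bigmax_cond _ (fun A => stable e A) df A' stA').
  rewrite ltn_neqAle le andbT; apply/eqP => E.
  have := minA A' (ltac:(by rewrite /Pd stA' E eqxx)); by mylia.
have sNA' : Nb A' \subset Nb A :\: Z.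
  apply/subsetP => v /NbP[u]; rewrite !inE => /andP[uZ uA] evu.
  rewrite andbC; apply/andP; split; first by apply/existsP; exists u; rewrite uA.
  apply/negP => /andP[vJ vNA]; move/negP: uZ; apply.
  apply/existsP; exists v; rewrite !inE vJ vNA /=; by rewrite e_sym.
have sZ : Z \subset Nb A by apply: subsetIr.
have cNA' : #|Nb A'| <= #|Nb A| - #|Z|.
  by rewrite -cardsDS //; apply: subset_leq_card.
have sJA : J :&: A \subset A'.
  apply/subsetP => j; rewrite !inE => /andP[jJ jA]; rewrite jA andbT.
  apply/negP => /existsP[z]; rewrite !inE => /andP[/andP[zJ _] ejz].
  by move/stableP: stJ => /(_ j z jJ zJ); rewrite ejz.
pose B2 := J :\: (A :|: Nb A).
have stAB : stable e (A :|: B2).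
  apply/stableP => x z; rewrite !inE => /orP[xA|/andP[/norP[xnA xnN] xJ]]
                                       /orP[zA|/andP[/norP[znA znN] zJ]].
  - by move/stableP: stA; apply.
  - apply/negP => exz; move/negP: znN; apply; apply/existsP; exists x.
    by rewrite xA e_sym.
  - apply/negP => exz; move/negP: xnN; apply; apply/existsP; exists z.
    by rewrite zA.
  - by move/stableP: stJ; apply.
have cAB : #|A :|: B2| = #|A| + #|B2|.
  by apply: cardU_dis => x xA; rewrite !inE xA.
have hAB := alpha_ge stAB.
have cJ2 : #|J| = #|J :&: A| + #|Z| + #|B2|.
  rewrite -(cardsID (A :|: Nb A) J) setIUr cardU_dis //.
  move=> x; rewrite !inE => /andP[_ xA]; rewrite negb_and; apply/orP; right.
  by have := stable_Nb stA xA; rewrite inE.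
have cJA := subset_leq_card sJA.
have cZ := subset_leq_card sZ.
move: dA' cNA' cJA cZ hAB cAB cJ2 cJ dfA d1 ltA; rewrite /df => ? ? ? ? ? ? ? ? ? ? ?.
mylia.
Qed.

Lemma perfect_matching : very_well_covered e ->
  exists p : T -> T, (forall x, e x (p x)) /\ (forall x, p (p x) = x).
Proof.
case=> wc noiso cT.
have [I [stI cI]] := alpha_attained.
have hl : forall A : {set T}, A \subset I -> #|A| <= #|NR e A|.
  move=> A sAI.
  have -> : NR e A = Nb A.
    by apply/setP => y; rewrite !inE; apply/existsP/existsP => [][x /andP[xA exy]];
       exists x; rewrite xA e_sym.
  by apply: (L1 wc noiso); apply: stable_sub stI.
have [f [injf ef]] := hall hl.
have fnI : forall x, x \in I -> f x \notin I.
  move=> x xI; apply/negP => fxI; move/stableP: stI => /(_ x (f x) xI fxI).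
  by rewrite ef.
have eqfI : f @: I = ~: I.
  apply/eqP; rewrite eqEcard; apply/andP; split.
    apply/subsetP => y /imsetP[x xI ->]; rewrite inE; exact: fnI.
  rewrite card_in_imset //.
  have := cardsC I; rewrite cI cT; mylia.
have preim : forall x, x \notin I -> exists2 i, i \in I & f i = x.
  move=> x xnI; have : x \in f @: I by rewrite eqfI inE.
  by case/imsetP => i iI ->; exists i.
pose p := fun x => if x \in I then f x else odflt x [pick i in I | f i == x].
have pnI : forall x, x \notin I -> p x \in I /\ f (p x) = x.
  move=> x xnI; rewrite /p (negbTE xnI).
  case: pickP => [i /andP[iI /eqP fi] | none] //=.
  have [i iI fi] := preim x xnI.
  by move: (none i); rewrite iI fi eqxx.
exists p; split.
  move=> x; case: (boolP (x \in I)) => xI.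
    by rewrite /p xI; apply: ef.
  have [pI fp] := pnI x xI.
  by rewrite e_sym; move: (ef _ pI); rewrite fp.
move=> x; case: (boolP (x \in I)) => xI.
  have fxnI := fnI x xI.
  have [pI fp] := pnI (f x) fxnI.
  have E : p x = f x by rewrite /p xI.
  by rewrite E; apply: injf.
have [pI fp] := pnI x xI.
by rewrite {1}/p pI.
Qed.

Lemma propP (p : T -> T) : very_well_covered e ->
  (forall x, e x (p x)) -> (forall x, p (p x) = x) ->
  forall x c d, e x c -> c != p x -> e (p x) d -> d != x -> e c d.
Proof.
case=> wc noiso cT ep pp x c d exc cpx epd dx.
apply/negPn/negP => necd.
have stK : stable e [set c; d].
  apply/stableP => a b; rewrite !inE => /orP[]/eqP-> /orP[]/eqP->;
    rewrite ?e_irr //; by rewrite e_sym.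
have [J maxJ sJ] := maxset_exists stK.
have stJ : stable e J by case/maxsetP: maxJ.
have cJ := wc J maxJ.
have cJ' : c \in J by rewrite (subsetP sJ) // !inE eqxx.
have dJ : d \in J by rewrite (subsetP sJ) // !inE eqxx orbT.
have xJ : x \notin J.
  by apply/negP => xJ; move/stableP: stJ => /(_ x c xJ cJ'); rewrite exc.
have pxJ : p x \notin J.
  by apply/negP => pJ; move/stableP: stJ => /(_ (p x) d pJ dJ); rewrite epd.
have injp : injective p by apply: (can_inj pp).
have c1 : #|J :|: p @: J| = #|J| + #|J|.
  rewrite cardU_dis ?card_imset //.
  move=> z zJ; apply/negP => /imsetP[j jJ zj].
  by move/stableP: stJ => /(_ j z jJ zJ); rewrite zj ep.
have xpx : x != p x by apply/negP => /eqP E; move: (ep x); rewrite -E e_irr.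
have c2 : #|(J :|: p @: J) :|: [set x; p x]| = #|J| + #|J| + 2.
  rewrite cardU_dis; first by rewrite c1 cards2 xpx.
  move=> z; rewrite !inE => /orP[zJ|/imsetP[j jJ zj]]; apply/negP => /orP[]/eqP zE.
  - by move: xJ; rewrite -zE zJ.
  - by move: pxJ; rewrite -zE zJ.
  - by move: jJ; rewrite -(pp j) -zj zE (negbTE pxJ).
  - by move: jJ; rewrite (injp _ _ (etrans (esym zj) zE)) (negbTE xJ).
have := max_card ((J :|: p @: J) :|: [set x; p x]).
rewrite c2 cT cJ; mylia.
Qed.

Lemma partner_in (p : T -> T) (S : {set T}) : very_well_covered e ->
  (forall x, e x (p x)) -> (forall x, p (p x) = x) ->
  local_max_stable e S -> forall v, v \in Nb S -> p v \in S.
Proof.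
move=> vwc ep pp [stS cS] v vN.
have PP := propP vwc ep pp.
have injp : injective p by apply: (can_inj pp).
apply/negPn/negP => pvS.
have vS : v \notin S.
  apply/negP => vS; case/NbP: vN => u uS evu.
  by move/stableP: stS => /(_ v u vS uS); rewrite evu.
have pnS : forall t, t \in S -> p t \notin S.
  move=> t tS; apply/negP => ptS.
  by move/stableP: stS => /(_ t (p t) tS ptS); rewrite ep.
pose Sv := S :&: [set u | e v u].
have F2 : forall t, t \in Sv -> ~~ e v (p t).
  move=> t; rewrite !inE => /andP[tS evt]; apply/negP => evp.
  have : e v v.
    apply: (PP t v v); first by rewrite e_sym.
    - by apply/eqP => E; move: pvS; rewrite E pp tS.
    - by rewrite e_sym.
    - by apply/eqP => E; move: vS; rewrite E tS.
  by rewrite e_irr.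
have F3 : forall t r, t \in Sv -> r \in S -> ~~ e v r -> ~~ e (p t) r.
  move=> t r; rewrite !inE => /andP[tS evt] rS nevr; apply/negP => epr.
  have : e v r.
    apply: (PP t v r) => //; first by rewrite e_sym.
    - by apply/eqP => E; move: pvS; rewrite E pp tS.
    - by apply/eqP => E; move: nevr; rewrite E evt.
  by rewrite (negbTE nevr).
have F4 : forall t1 t2, t1 \in Sv -> t2 \in Sv -> ~~ e (p t1) (p t2).
  move=> t1 t2 t1S t2S; apply/negP => epp.
  move: t1S t2S (F2 t2 t2S); rewrite !inE => /andP[t1S evt1] /andP[t2S _] /negP; apply.
  apply: (PP t1 v (p t2)) => //; first by rewrite e_sym.
  - by apply/eqP => E; move: pvS; rewrite E pp t1S.
  - by apply/eqP => E; move: (pnS t2 t2S); rewrite E t1S.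
pose Ss := (S :\: Sv) :|: (v |: p @: Sv).
have stSs : stable e Ss.
  have key : forall a b, a \in Ss -> b \in Ss -> ~~ e a b.
    have cls : forall a, a \in Ss ->
       [\/ (a \in S) && ~~ e v a, a = v | exists2 t, t \in Sv & a = p t].
      move=> a; rewrite !inE => /orP[/andP[/nandP[aS|nev] aS']|/orP[/eqP->|/imsetP[t tS ->]]].
      - by move: aS; rewrite aS'.
      - by apply: Or31; rewrite aS' nev.
      - by apply: Or32.
      - by apply: Or33; exists t.
    suff H : forall a b, a \in Ss -> b \in Ss ->
        ((a \in S) && ~~ e v a) \/ a = v -> ~~ e a b.
      move=> a b aS bS; case: (cls a aS) => [ha|ha|[t tS Ea]]; last rewrite Ea in aS *.
      - by apply: (H _ _ aS bS); left.
      - by apply: (H _ _ aS bS); right.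
      case: (cls b bS) => [hb|hb|[t2 t2S ->]].
      - by rewrite e_sym; apply: (H _ _ bS aS); left.
      - by rewrite e_sym; apply: (H _ _ bS aS); right.
      - exact: F4.
    move=> a b aS bS ha; case: (cls b bS) => [/andP[bS' nevb]|->|[t tS ->]];
      case: ha => [/andP[aS' neva]|->].
    - by move/stableP: stS; apply.
    - exact: nevb.
    - by rewrite e_sym.
    - by rewrite e_irr.
    - by rewrite e_sym; apply: F3.
    - exact: F2.
  by apply/stableP.
have sSs : Ss \subset closed_nbhd e S.
  apply/subsetP => a; rewrite !inE => /orP[/andP[_ aS]|/orP[/eqP->|/imsetP[t tS ->]]].
  - by rewrite aS.
  - by move: vN; rewrite inE => ->; rewrite orbT.
  - apply/orP; right; apply/existsP; exists t.
    move: tS; rewrite !inE => /andP[tS _]; by rewrite tS e_sym ep.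
have cSs : #|Ss| = #|S| + 1.
  have sSvS : Sv \subset S by apply: subsetIl.
  rewrite cardU_dis.
    rewrite cardsDS // cardsU1 card_imset //.
    have hv : v \notin p @: Sv.
      apply/negP => /imsetP[t tS E]; move: tS; rewrite inE => /andP[tS _].
      by move: pvS; rewrite E pp tS.
    rewrite hv /=. have := subset_leq_card sSvS. mylia.
  move=> a; rewrite !inE => /andP[_ aS]; apply/negP => /orP[/eqP E|/imsetP[t tS E]].
    by move: vS; rewrite -E aS.
  move: tS; rewrite inE => /andP[tS _].
  by move: (pnS t tS); rewrite -E aS.
have := alpha_in_ge sSs stSs; rewrite -cS cSs; mylia.
Qed.
End Graph.

Theorem theorem7 (T : finType) (e : rel T)
  (e_sym : symmetric e) (e_irr : irreflexive e)
  (hG : very_well_covered e) (S : {set T}) (hS : local_max_stable e S) :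
  KE_in e (closed_nbhd e S).
Proof.
have [p [ep pp]] := perfect_matching e_sym e_irr hG.
have pin := partner_in e_sym e_irr hG ep pp hS.
have [stS cS] := hS.
have injp : injective p by apply: (can_inj pp).
have eN : closed_nbhd e S = S :|: Nb e S by [].
have disS : forall x, x \in S -> x \notin Nb e S by move=> x; apply: stable_Nb.
have cN : #|closed_nbhd e S| = #|S| + #|Nb e S| by rewrite eN cardU_dis.
pose M0 := [set (v, p v) | v in Nb e S].
have mM0 : matching_in e (closed_nbhd e S) M0.
  apply/andP; split.
    apply/forallP => q; apply/implyP => /imsetP[v vN ->] /=.
    by rewrite ep eN !inE (pin v vN); move: vN; rewrite inE => ->; rewrite orbT.
  apply/forallP => q; apply/implyP => /imsetP[v vN ->].
  apply/forallP => q'; apply/implyP => /imsetP[w wN ->] /=.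
  apply/implyP => neq.
  have vw : v != w by apply: contra neq => /eqP->.
  have vS : v \notin S by apply/negP => vS; move: (disS v vS); rewrite vN.
  have wS : w \notin S by apply/negP => wS; move: (disS w wS); rewrite wN.
  rewrite vw /=.
  apply/and3P; split.
  - by apply: contra vS => /eqP->; apply: pin.
  - by apply: contra wS => /eqP<-; apply: pin.
  - by apply: contra vw => /eqP/injp->.
have cM0 : #|M0| = #|Nb e S|.
  by rewrite card_imset // => a b [].
have lo : #|Nb e S| <= mu_in e (closed_nbhd e S).
  rewrite -cM0.
  exact: (@leq_bigmax_cond _ (fun M => matching_in e (closed_nbhd e S) M) (fun M => #|M|) M0 mM0).
have hi : mu_in e (closed_nbhd e S) <= #|Nb e S|.
  apply/bigmax_leqP => M /andP[/forallP H1 /forallP H2].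
  pose g := fun q : T * T => if q.1 \in S then q.2 else q.1.
  have gN : forall q, q \in M -> g q \in Nb e S.
    move=> q qM; move/implyP: (H1 q) => /(_ qM) /and3P[eq1 q1 q2].
    rewrite /g; case: ifP => q1S.
      move: q2; rewrite eN inE => /orP[q2S|//].
      by move/stableP: stS => /(_ _ _ q1S q2S); rewrite eq1.
    by move: q1; rewrite eN inE q1S.
  have ginj : {in M &, injective g}.
    move=> q q' qM q'M E; apply/eqP; apply/negPn/negP => nq.
    move/implyP: (H2 q) => /(_ qM) /forallP /(_ q') /implyP /(_ q'M) /implyP /(_ nq).
    move/and4P => [h11 h12 h21 h22]; move: E; rewrite /g.
    case: ifP => _; case: ifP => _ E.
    + by move: h22; rewrite E eqxx.
    + by move: h21; rewrite E eqxx.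
    + by move: h12; rewrite E eqxx.
    + by move: h11; rewrite E eqxx.
  rewrite -(card_in_imset ginj); apply: subset_leq_card.
  by apply/subsetP => y /imsetP[q qM ->]; apply: gN.
rewrite /KE_in cN -cS.
have -> : mu_in e (closed_nbhd e S) = #|Nb e S| by apply/eqP; rewrite eqn_leq lo hi.
done.
Qed.
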